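(* Let $\mathcal H,\mathcal K$ be Hilbert spaces, $A$ a densely defined linear operator in $\mathcal H$ and $B$ a densely defined linear operator in $\mathcal K$. Suppose $A\dashv B$ with (possibly unbounded) intertwining operator $T$. If the resolvent set $\rho(A)$ is nonempty, then $T$ is everywhere defined and bounded.
   Context: A closed, densely defined operator $T:\mathcal H\to\mathcal K$ is called an intertwining operator for $A$ and $B$ if: (io$_0$) $D(A)\subset D(T)$ and $D(TA)=D(A)$, i.e. $\xi\in D(A)$ implies $A\xi\in D(T)$; (io$_1$) $T$ maps $D(A)$ into $D(B)$; (io$_2$) $BT\xi=TA\xi$ for all $\xi\in D(A)$. We write $A\dashv B$ ($A$ is quasi-similar to $B$) if there exists an intertwining operator $T$ for $A$ and $B$ which is injective and whose inverse $T^{-1}$ (defined on the range of $T$) is densely defined. Equivalently, $A\subseteq T^{-1}BT$ for a closed, densely defined, injective operator $T$ with dense range. *)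

(* Defs.v *)
From Stdlib Require Import Reals.
Open Scope R_scope.

Record Cplx := mkC { Cre : R ; Cim : R }.
Definition Cadd (a b : Cplx) : Cplx := mkC (Cre a + Cre b) (Cim a + Cim b).
Definition Cmul (a b : Cplx) : Cplx :=
  mkC (Cre a * Cre b - Cim a * Cim b) (Cre a * Cim b + Cim a * Cre b).
Definition Cconj (a : Cplx) : Cplx := mkC (Cre a) (- Cim a).
Definition C0 : Cplx := mkC 0 0.
Definition C1 : Cplx := mkC 1 0.

Record HilbertSpace := {
  hcar :> Type;
  hzero : hcar;
  hadd : hcar -> hcar -> hcar;
  hopp : hcar -> hcar;
  hscal : Cplx -> hcar -> hcar;
  hinner : hcar -> hcar -> Cplx;
  hadd_assoc : forall x y z, hadd x (hadd y z) = hadd (hadd x y) z;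
  hadd_comm : forall x y, hadd x y = hadd y x;
  hadd_0 : forall x, hadd x hzero = x;
  hadd_opp : forall x, hadd x (hopp x) = hzero;
  hscal_1 : forall x, hscal C1 x = x;
  hscal_mul : forall a b x, hscal a (hscal b x) = hscal (Cmul a b) x;
  hscal_addv : forall a x y, hscal a (hadd x y) = hadd (hscal a x) (hscal a y);
  hscal_adds : forall a b x, hscal (Cadd a b) x = hadd (hscal a x) (hscal b x);
  (* inner product axioms (linear in the first argument) *)
  hinner_add : forall x y z, hinner (hadd x y) z = Cadd (hinner x z) (hinner y z);
  hinner_scal : forall a x y, hinner (hscal a x) y = Cmul a (hinner x y);
  hinner_conj : forall x y, hinner y x = Cconj (hinner x y);
  hinner_pos : forall x, 0 <= Cre (hinner x x);
  hinner_def : forall x, hinner x x = C0 -> x = hzero;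
  hcomplete : forall u : nat -> hcar,
    (forall eps, 0 < eps -> exists N, forall m n, (N <= m)%nat -> (N <= n)%nat ->
        sqrt (Cre (hinner (hadd (u m) (hopp (u n))) (hadd (u m) (hopp (u n))))) < eps) ->
    exists l, forall eps, 0 < eps -> exists N, forall n, (N <= n)%nat ->
        sqrt (Cre (hinner (hadd (u n) (hopp l)) (hadd (u n) (hopp l)))) < eps
}.

Arguments hzero {h}. Arguments hadd {h}. Arguments hopp {h}.
Arguments hscal {h}. Arguments hinner {h}.

Definition hsub {H : HilbertSpace} (x y : H) : H := hadd x (hopp y).
Definition hnorm {H : HilbertSpace} (x : H) : R := sqrt (Cre (hinner x x)).

Definition hconv {H : HilbertSpace} (u : nat -> H) (l : H) : Prop :=
  forall eps, 0 < eps -> exists N, forall n, (N <= n)%nat -> hnorm (hsub (u n) l) < eps.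

Definition dense {H : HilbertSpace} (S : H -> Prop) : Prop :=
  forall x eps, 0 < eps -> exists d, S d /\ hnorm (hsub x d) < eps.

Record Op (H K : HilbertSpace) := mkOp { dom : H -> Prop ; app : H -> K }.
Arguments dom {H K}. Arguments app {H K}.

Definition linear_op {H K : HilbertSpace} (T : Op H K) : Prop :=
  dom T hzero /\
  (forall x y, dom T x -> dom T y -> dom T (hadd x y)) /\
  (forall a x, dom T x -> dom T (hscal a x)) /\
  (forall x y, dom T x -> dom T y -> app T (hadd x y) = hadd (app T x) (app T y)) /\
  (forall a x, dom T x -> app T (hscal a x) = hscal a (app T x)).

Definition densely_defined {H K : HilbertSpace} (T : Op H K) : Prop := dense (dom T).

Definition closed_op {H K : HilbertSpace} (T : Op H K) : Prop :=
  forall (u : nat -> H) (x : H) (y : K),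
    (forall n, dom T (u n)) -> hconv u x -> hconv (fun n => app T (u n)) y ->
    dom T x /\ app T x = y.

Definition injective_op {H K : HilbertSpace} (T : Op H K) : Prop :=
  forall x y, dom T x -> dom T y -> app T x = app T y -> x = y.
Definition range_op {H K : HilbertSpace} (T : Op H K) (y : K) : Prop :=
  exists x, dom T x /\ app T x = y.

Definition intertwining {H K : HilbertSpace} (A : Op H H) (B : Op K K) (T : Op H K) : Prop :=
  closed_op T /\ densely_defined T /\ linear_op T /\
  (forall xi, dom A xi -> dom T xi /\ dom T (app A xi)) /\           (* io_0 *)
  (forall xi, dom A xi -> dom B (app T xi)) /\
  (forall xi, dom A xi -> app B (app T xi) = app T (app A xi)).

(** T witnesses A ⊣ B *)
Definition quasi_similar_via {H K : HilbertSpace} (A : Op H H) (B : Op K K) (T : Op H K) : Prop :=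
  intertwining A B T /\ injective_op T /\ dense (range_op T).

Definition in_resolvent {H : HilbertSpace} (A : Op H H) (lam : Cplx) : Prop :=
  exists Rl : H -> H,
    (forall y, dom A (Rl y) /\ hsub (app A (Rl y)) (hscal lam (Rl y)) = y) /\
    (forall x, dom A x -> Rl (hsub (app A x) (hscal lam x)) = x) /\
    (exists M, forall y, hnorm (Rl y) <= M * hnorm y).

Definition everywhere_defined_bounded {H K : HilbertSpace} (T : Op H K) : Prop :=
  (forall x, dom T x) /\ exists M, forall x, hnorm (app T x) <= M * hnorm x.

(* Main.v *)
Require Import Defs.
From Stdlib Require Import Reals Lra Classical ClassicalEpsilon.
Open Scope R_scope.

Lemma Cext (a b : Cplx) : Cre a = Cre b -> Cim a = Cim b -> a = b.
Proof. destruct a, b; simpl; intros; subst; reflexivity. Qed.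

Arguments hadd_assoc {h}. Arguments hadd_comm {h}. Arguments hadd_0 {h}.
Arguments hadd_opp {h}. Arguments hscal_1 {h}. Arguments hscal_mul {h}.
Arguments hscal_addv {h}. Arguments hscal_adds {h}. Arguments hinner_add {h}.
Arguments hinner_scal {h}. Arguments hinner_conj {h}. Arguments hinner_pos {h}.
Arguments hinner_def {h}.

Lemma hadd_0l {H : HilbertSpace} (x : H) : hadd hzero x = x.
Proof. rewrite hadd_comm; apply hadd_0. Qed.
Lemma hadd_oppl {H : HilbertSpace} (x : H) : hadd (hopp x) x = hzero.
Proof. rewrite hadd_comm; apply hadd_opp. Qed.
Lemma hadd_cancel {H : HilbertSpace} (x y z : H) : hadd x y = hadd x z -> y = z.
Proof.
  intro E. rewrite <- (hadd_0l y), <- (hadd_0l z), <- (hadd_oppl x), <- !hadd_assoc, E.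
  reflexivity.
Qed.
Lemma hopp_unique {H : HilbertSpace} (x y : H) : hadd x y = hzero -> y = hopp x.
Proof. intro E. apply (hadd_cancel x). rewrite E, hadd_opp. reflexivity. Qed.
Lemma hopp_opp {H : HilbertSpace} (x : H) : hopp (hopp x) = x.
Proof. symmetry. apply hopp_unique. apply hadd_oppl. Qed.
Lemma hopp_add {H : HilbertSpace} (x y : H) : hopp (hadd x y) = hadd (hopp x) (hopp y).
Proof.
  symmetry. apply hopp_unique.
  rewrite (hadd_comm (hopp x)), hadd_assoc, <- (hadd_assoc x y), hadd_opp, hadd_0, hadd_opp.
  reflexivity.
Qed.
Lemma hopp_zero {H : HilbertSpace} : hopp (@hzero H) = hzero.
Proof. symmetry; apply hopp_unique; apply hadd_0. Qed.
Lemma hsub_diag {H : HilbertSpace} (x : H) : hsub x x = hzero.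
Proof. apply hadd_opp. Qed.
Lemma hsub_0 {H : HilbertSpace} (x : H) : hsub x hzero = x.
Proof. unfold hsub; rewrite hopp_zero; apply hadd_0. Qed.
Lemma hsub_sym {H : HilbertSpace} (x y : H) : hsub y x = hopp (hsub x y).
Proof. unfold hsub. rewrite hopp_add, hopp_opp, hadd_comm. reflexivity. Qed.
Lemma hsub_chain {H : HilbertSpace} (x y z : H) : hsub x z = hadd (hsub x y) (hsub y z).
Proof.
  unfold hsub. rewrite hadd_assoc, <- (hadd_assoc x (hopp y) y), hadd_oppl, hadd_0. reflexivity.
Qed.
Lemma hsub_addK {H : HilbertSpace} (a b : H) : hsub (hadd a b) a = b.
Proof.
  unfold hsub. rewrite (hadd_comm a b), <- hadd_assoc, hadd_opp, hadd_0. reflexivity.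
Qed.
Lemma hsub_add_r {H : HilbertSpace} (z v w : H) : hsub z (hadd v w) = hsub (hsub z v) w.
Proof. unfold hsub. rewrite hopp_add, hadd_assoc. reflexivity. Qed.
Lemma hsub_swap {H : HilbertSpace} (a b c d : H) :
  hsub (hsub a b) (hsub c d) = hsub (hsub a c) (hsub b d).
Proof.
  unfold hsub. rewrite !hopp_add, !hopp_opp.
  rewrite <- !hadd_assoc. f_equal.
  rewrite !hadd_assoc. f_equal. apply hadd_comm.
Qed.

Lemma hscal_0 {H : HilbertSpace} (x : H) : hscal C0 x = hzero.
Proof.
  apply (hadd_cancel (hscal C0 x)). rewrite hadd_0, <- hscal_adds.
  f_equal. apply Cext; simpl; ring.
Qed.
Lemma hscal_m1 {H : HilbertSpace} (x : H) : hscal (mkC (-1) 0) x = hopp x.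
Proof.
  apply hopp_unique. rewrite <- (hscal_1 x) at 1. rewrite <- hscal_adds.
  rewrite <- (hscal_0 x). f_equal. apply Cext; unfold C1, C0; simpl; ring.
Qed.
Lemma hscal_zero {H : HilbertSpace} (a : Cplx) : hscal a (@hzero H) = hzero.
Proof.
  apply (hadd_cancel (hscal a hzero)). rewrite hadd_0, <- hscal_addv, hadd_0. reflexivity.
Qed.
Lemma hscal_opp {H : HilbertSpace} (a : Cplx) (x : H) : hscal a (hopp x) = hopp (hscal a x).
Proof.
  apply hopp_unique. rewrite <- hscal_addv, hadd_opp. apply hscal_zero.
Qed.
Lemma hscal_sub {H : HilbertSpace} (a : Cplx) (x y : H) :
  hscal a (hsub x y) = hsub (hscal a x) (hscal a y).
Proof. unfold hsub. rewrite hscal_addv, hscal_opp. reflexivity. Qed.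
Lemma hscal_real_comp {H : HilbertSpace} (s t : R) (x : H) :
  hscal (mkC s 0) (hscal (mkC t 0) x) = hscal (mkC (s*t) 0) x.
Proof. rewrite hscal_mul. f_equal. apply Cext; simpl; ring. Qed.
Lemma hscal_real1 {H : HilbertSpace} (x : H) : hscal (mkC 1 0) x = x.
Proof. apply hscal_1. Qed.
Definition N2 {H : HilbertSpace} (x : H) : R := Cre (hinner x x).

Lemma N2_ge0 {H : HilbertSpace} (x : H) : 0 <= N2 x.
Proof. apply hinner_pos. Qed.
Lemma hnorm_ge0 {H : HilbertSpace} (x : H) : 0 <= hnorm x.
Proof. apply sqrt_pos. Qed.

Lemma Re_inner_sym {H : HilbertSpace} (x y : H) : Cre (hinner y x) = Cre (hinner x y).
Proof. rewrite hinner_conj. reflexivity. Qed.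
Lemma Re_inner_addr {H : HilbertSpace} (x y z : H) :
  Cre (hinner x (hadd y z)) = Cre (hinner x y) + Cre (hinner x z).
Proof.
  rewrite Re_inner_sym, hinner_add. simpl. rewrite !(Re_inner_sym x). reflexivity.
Qed.
Lemma Re_inner_scall {H : HilbertSpace} (t : R) (x y : H) :
  Cre (hinner (hscal (mkC t 0) x) y) = t * Cre (hinner x y).
Proof. rewrite hinner_scal. simpl. ring. Qed.
Lemma Re_inner_scalr {H : HilbertSpace} (t : R) (x y : H) :
  Cre (hinner x (hscal (mkC t 0) y)) = t * Cre (hinner x y).
Proof. rewrite Re_inner_sym, Re_inner_scall, Re_inner_sym. reflexivity. Qed.

Lemma N2_add {H : HilbertSpace} (x y : H) :
  N2 (hadd x y) = N2 x + N2 y + 2 * Cre (hinner x y).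
Proof.
  unfold N2. rewrite hinner_add. simpl. rewrite !Re_inner_addr.
  rewrite (Re_inner_sym y x). ring.
Qed.
Lemma N2_scal {H : HilbertSpace} (t : R) (x : H) :
  N2 (hscal (mkC t 0) x) = t * t * N2 x.
Proof. unfold N2. rewrite Re_inner_scall, Re_inner_scalr. ring. Qed.

Lemma CS_real {H : HilbertSpace} (x y : H) :
  Cre (hinner x y) * Cre (hinner x y) <= N2 x * N2 y.
Proof.
  set (b := Cre (hinner x y)). set (a := N2 y). set (c := N2 x).
  assert (Q : forall t, 0 <= c + 2 * t * b + t * t * a).
  { intro t. pose proof (N2_ge0 (hadd x (hscal (mkC t 0) y))) as P.
    rewrite N2_add, N2_scal, Re_inner_scalr in P. unfold a, b, c. lra. }
  assert (Ha : 0 <= a) by apply N2_ge0. assert (Hc : 0 <= c) by apply N2_ge0.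
  destruct (Req_dec a 0) as [A0|A0].
  - destruct (Req_dec b 0) as [B0|B0].
    + rewrite B0, A0. lra.
    + exfalso. specialize (Q (- (c + 1) / (2 * b))). rewrite A0 in Q.
      replace (c + 2 * (- (c + 1) / (2 * b)) * b + - (c + 1) / (2 * b) * (- (c + 1) / (2 * b)) * 0)
        with (-1) in Q by (field; auto). lra.
  - specialize (Q (- b / a)).
    replace (c + 2 * (- b / a) * b + - b / a * (- b / a) * a) with (c - b * b / a) in Q
      by (field; auto).
    assert (Hpos : 0 < a) by lra.
    apply Rmult_le_compat_r with (r := a) in Q; [|lra].
    replace ((c - b * b / a) * a) with (c * a - b * b) in Q by (field; auto). lra.
Qed.

Lemma hnorm_triangle {H : HilbertSpace} (x y : H) :
  hnorm (hadd x y) <= hnorm x + hnorm y.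
Proof.
  unfold hnorm. fold (N2 (hadd x y)) (N2 x) (N2 y).
  rewrite N2_add.
  pose proof (N2_ge0 x); pose proof (N2_ge0 y).
  assert (Hb : Cre (hinner x y) <= sqrt (N2 x) * sqrt (N2 y)).
  { rewrite <- sqrt_mult by auto.
    apply Rle_trans with (Rabs (Cre (hinner x y))); [apply Rle_abs|].
    rewrite <- sqrt_Rsqr_abs. apply sqrt_le_1_alt. unfold Rsqr. apply CS_real. }
  rewrite <- (sqrt_square (sqrt (N2 x) + sqrt (N2 y))).
  2:{ pose proof (sqrt_pos (N2 x)); pose proof (sqrt_pos (N2 y)); lra. }
  apply sqrt_le_1_alt.
  replace ((sqrt (N2 x) + sqrt (N2 y)) * (sqrt (N2 x) + sqrt (N2 y))) with
    (sqrt (N2 x) * sqrt (N2 x) + sqrt (N2 y) * sqrt (N2 y) + 2 * (sqrt (N2 x) * sqrt (N2 y))) by ring.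
  rewrite !sqrt_sqrt by auto. lra.
Qed.

Lemma hnorm_scal {H : HilbertSpace} (t : R) (x : H) :
  hnorm (hscal (mkC t 0) x) = Rabs t * hnorm x.
Proof.
  unfold hnorm. fold (N2 (hscal (mkC t 0) x)) (N2 x). rewrite N2_scal.
  rewrite sqrt_mult. 2: apply Rle_0_sqr. 2: apply N2_ge0.
  rewrite <- sqrt_Rsqr_abs. reflexivity.
Qed.
Lemma hnorm_opp {H : HilbertSpace} (x : H) : hnorm (hopp x) = hnorm x.
Proof. rewrite <- hscal_m1, hnorm_scal. replace (Rabs (-1)) with 1. ring. unfold Rabs; destruct (Rcase_abs (-1)); lra. Qed.
Lemma hnorm_zero {H : HilbertSpace} : hnorm (@hzero H) = 0.
Proof.
  rewrite <- (hscal_0 (@hzero H)). unfold C0. rewrite hnorm_scal, Rabs_R0. ring.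
Qed.
Lemma hnorm_sub_sym {H : HilbertSpace} (x y : H) : hnorm (hsub y x) = hnorm (hsub x y).
Proof. rewrite hsub_sym, hnorm_opp. reflexivity. Qed.
Lemma hnorm_sub_tri {H : HilbertSpace} (x y z : H) :
  hnorm (hsub x z) <= hnorm (hsub x y) + hnorm (hsub y z).
Proof. rewrite (hsub_chain x y z). apply hnorm_triangle. Qed.
Lemma hnorm_sub_le {H : HilbertSpace} (x y : H) : hnorm (hsub x y) <= hnorm x + hnorm y.
Proof. unfold hsub. rewrite <- (hnorm_opp y). apply hnorm_triangle. Qed.
Lemma lin_zero {H K : HilbertSpace} (T : Op H K) : linear_op T -> app T hzero = hzero.
Proof.
  intros (D0 & Dadd & Dsc & Aadd & Asc).
  apply (hadd_cancel (app T hzero)). rewrite hadd_0, <- Aadd by auto. rewrite hadd_0. reflexivity.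
Qed.
Lemma lin_opp {H K : HilbertSpace} (T : Op H K) x : linear_op T -> dom T x ->
  dom T (hopp x) /\ app T (hopp x) = hopp (app T x).
Proof.
  intros (D0 & Dadd & Dsc & Aadd & Asc) Dx. rewrite <- !hscal_m1. split; auto.
Qed.
Lemma lin_sub {H K : HilbertSpace} (T : Op H K) x y : linear_op T -> dom T x -> dom T y ->
  dom T (hsub x y) /\ app T (hsub x y) = hsub (app T x) (app T y).
Proof.
  intros L Dx Dy. destruct (lin_opp T y L Dy) as [D1 E1].
  destruct L as (D0 & Dadd & Dsc & Aadd & Asc). unfold hsub. split; auto.
  rewrite Aadd by auto. rewrite E1. reflexivity.
Qed.

Lemma geom_small (eps : R) : 0 < eps -> exists N, forall n, (N <= n)%nat -> (/2) ^ n < eps.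
Proof.
  intro He. destruct (pow_lt_1_zero (/2)) with (y := eps) as [N HN].
  { rewrite Rabs_pos_eq; lra. } { exact He. }
  exists N. intros n Hn. specialize (HN n Hn). rewrite Rabs_pos_eq in HN; auto.
  apply pow_le; lra.
Qed.

Lemma limit_of_cauchy {H : HilbertSpace} (u : nat -> H) :
  (forall eps, 0 < eps -> exists N, forall m n, (N <= m)%nat -> (N <= n)%nat ->
        hnorm (hsub (u m) (u n)) < eps) -> exists l, hconv u l.
Proof. intro C. exact (hcomplete H u C). Qed.

Lemma bound_of_limit {H : HilbertSpace} (u : nat -> H) (l c : H) (r : R) (K : nat) :
  hconv u l -> (forall n, (K <= n)%nat -> hnorm (hsub (u n) c) <= r) -> hnorm (hsub l c) <= r.
Proof.
  intros Hc Hb. apply Rnot_lt_le. intro Hlt.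
  destruct (Hc (hnorm (hsub l c) - r)) as [N HN]; [lra|].
  specialize (HN (max N K) (Nat.le_max_l _ _)). pose proof (hnorm_sub_tri l (u (max N K)) c) as Tr.
  rewrite (hnorm_sub_sym (u _) l) in Tr. specialize (Hb (max N K) (Nat.le_max_r _ _)). lra.
Qed.
Lemma baire {H : HilbertSpace} (P : nat -> H -> Prop) :
  (forall x, exists n, P n x) ->
  exists n x0 r, 0 < r /\ forall z, hnorm (hsub z x0) < r ->
    forall eps, 0 < eps -> exists w, P n w /\ hnorm (hsub z w) < eps.
Proof.
  intro Hcov. apply NNPP; intro Hn.
  assert (Hstep : forall n c r, 0 < r -> exists z eps, hnorm (hsub z c) < r /\ 0 < eps /\
             forall w, P n w -> eps <= hnorm (hsub z w)).
  { intros n c r Hr. apply NNPP; intro H1. apply Hn. exists n, c, r. split; auto.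
    intros z Hz eps Heps. apply NNPP; intro H2. apply H1. exists z, eps.
    repeat split; auto. intros w Pw.
    destruct (Rle_lt_dec eps (hnorm (hsub z w))) as [h|h]; auto.
    exfalso. apply H2. exists w. auto. }
  pose (spec := fun n (p q : H * R) =>
     0 < snd q /\ snd q <= snd p / 2 /\ hnorm (hsub (fst q) (fst p)) + snd q <= snd p /\
     forall z, hnorm (hsub z (fst q)) <= snd q -> ~ P n z).
  assert (Hex : forall n (p : H * R), exists q : H * R, 0 < snd p -> spec n p q).
  { intros n [c r]. destruct (Rlt_dec 0 r) as [Hr|Hr].
    - destruct (Hstep n c r Hr) as (z & eps & Hz & He & Hw).
      exists (z, Rmin (eps / 2) ((r - hnorm (hsub z c)) / 2)). intros _.
      unfold spec; simpl.
      pose proof (hnorm_ge0 (hsub z c)).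
      pose proof (Rmin_l (eps / 2) ((r - hnorm (hsub z c)) / 2)).
      pose proof (Rmin_r (eps / 2) ((r - hnorm (hsub z c)) / 2)).
      repeat split.
      + apply Rmin_glb_lt; lra.
      + lra.
      + lra.
      + intros z' Hz' Pz'. specialize (Hw z' Pz'). rewrite hnorm_sub_sym in Hw. lra.
    - exists (c, r). simpl; intro; contradiction. }
  pose (step := fun n p => proj1_sig (constructive_indefinite_description _ (Hex n p))).
  assert (Hsp : forall n p, 0 < snd p -> spec n p (step n p)).
  { intros n p. unfold step. destruct (constructive_indefinite_description _ (Hex n p)); auto. }
  pose (sB := fix f k := match k with O => (@hzero H, 1) | S k => step k (f k) end).
  assert (Hpos : forall k, 0 < snd (sB k) /\ snd (sB k) <= (/2) ^ k).
  { induction k as [|k [IH1 IH2]]; simpl; [lra|].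
    destruct (Hsp k (sB k) IH1) as (A1 & A2 & _). split; [exact A1|]. lra. }
  assert (HS : forall k, spec k (sB k) (sB (S k))).
  { intro k. apply Hsp. apply Hpos. }
  assert (HD : forall n m, (n <= m)%nat ->
     hnorm (hsub (fst (sB m)) (fst (sB n))) + snd (sB m) <= snd (sB n)).
  { intros n m Hnm. induction Hnm.
    - rewrite hsub_diag, hnorm_zero. lra.
    - destruct (HS m) as (_ & _ & A3 & _).
      pose proof (hnorm_sub_tri (fst (sB (S m))) (fst (sB m)) (fst (sB n))). simpl in *. lra. }
  destruct (limit_of_cauchy (fun k => fst (sB k))) as [l Hl].
  { intros eps He. destruct (geom_small eps He) as [N HN]. exists N. intros m n Hm Hn'.
    destruct (Nat.le_ge_cases n m) as [h|h].
    - specialize (HD n m h). pose proof (proj1 (Hpos m)). pose proof (proj2 (Hpos n)).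
      specialize (HN n Hn'). lra.
    - specialize (HD m n h). pose proof (proj1 (Hpos n)). pose proof (proj2 (Hpos m)).
      specialize (HN m Hm). rewrite hnorm_sub_sym in HD. lra. }
  destruct (Hcov l) as [n Pn].
  destruct (HS n) as (_ & _ & _ & A4). apply (A4 l); auto.
  apply (bound_of_limit (fun k => fst (sB k)) l _ _ (S n) Hl).
  intros k Hk. specialize (HD (S n) k Hk). pose proof (proj1 (Hpos k)). lra.
Qed.
Lemma small_mul (a eps : R) : 0 <= a -> 0 < eps ->
  exists N, forall n, (N <= n)%nat -> a * (/2) ^ n < eps.
Proof.
  intros Ha He. destruct (geom_small (eps / (a + 1))) as [N HN].
  { apply Rdiv_lt_0_compat; lra. }
  exists N. intros n Hn. specialize (HN n Hn).
  assert (0 < (/2) ^ n) by (apply pow_lt; lra).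
  apply Rmult_lt_compat_l with (r := a + 1) in HN; [|lra].
  replace ((a + 1) * (eps / (a + 1))) with eps in HN by (field; lra). nra.
Qed.

Lemma closed_graph {H K : HilbertSpace} (T : Op H K) :
  linear_op T -> closed_op T -> (forall x, dom T x) ->
  exists M, forall x, hnorm (app T x) <= M * hnorm x.
Proof.
  intros L Cl Dall.
  assert (Lc := L). destruct Lc as (D0 & Dadd & Dsc & Aadd & Asc).
  destruct (baire (fun n x => hnorm (app T x) <= INR n)) as (n & x0 & r & Hr & Hden).
  { intro x. destruct (INR_unbounded (hnorm (app T x))) as [n Hn]. exists n. lra. }
  assert (S2 : forall z, hnorm z < r -> forall eps, 0 < eps ->
             exists w, hnorm (app T w) <= 2 * INR n /\ hnorm (hsub z w) < eps).
  { intros z Hz eps He.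
    destruct (Hden (hadd x0 z)) with (eps := eps / 2) as (w1 & P1 & N1).
    { rewrite hsub_addK. exact Hz. } { lra. }
    destruct (Hden x0) with (eps := eps / 2) as (w2 & P2 & N2').
    { rewrite hsub_diag, hnorm_zero. exact Hr. } { lra. }
    exists (hsub w1 w2). split.
    - destruct (lin_sub T w1 w2 L (Dall _) (Dall _)) as [_ E]. rewrite E.
      pose proof (hnorm_sub_le (app T w1) (app T w2)). lra.
    - replace z with (hsub (hadd x0 z) x0) by apply hsub_addK.
      rewrite hsub_swap. pose proof (hnorm_sub_le (hsub (hadd x0 z) w1) (hsub x0 w2)). lra. }
  set (C := 4 * INR n / r).
  assert (HC : 0 <= C).
  { unfold C. apply Rmult_le_pos; [pose proof (pos_INR n); lra|]. left; apply Rinv_0_lt_compat; lra. }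
  assert (S3 : forall u eps, 0 < eps ->
             exists w, hnorm (hsub u w) < eps /\ hnorm (app T w) <= C * hnorm u).
  { intros u eps He. destruct (hnorm_ge0 u) as [Hu|Hu].
    - set (s := r / (2 * hnorm u)).
      assert (Hs : 0 < s) by (unfold s; apply Rdiv_lt_0_compat; lra).
      destruct (S2 (hscal (mkC s 0) u)) with (eps := eps * s) as (w' & A1 & A2).
      { rewrite hnorm_scal, Rabs_pos_eq by lra. unfold s. field_simplify; lra. }
      { nra. }
      exists (hscal (mkC (/ s) 0) w'). split.
      + replace u with (hscal (mkC (/ s) 0) (hscal (mkC s 0) u)) at 1.
        2:{ rewrite hscal_real_comp. rewrite Rinv_l by lra. apply hscal_1. }
        rewrite <- hscal_sub, hnorm_scal, Rabs_pos_eq.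
        2:{ left; apply Rinv_0_lt_compat; lra. }
        apply Rmult_lt_compat_l with (r := / s) in A2; [|apply Rinv_0_lt_compat; lra].
        replace (/ s * (eps * s)) with eps in A2 by (field; lra). exact A2.
      + rewrite Asc by auto. rewrite hnorm_scal, Rabs_pos_eq.
        2:{ left; apply Rinv_0_lt_compat; lra. }
        apply Rle_trans with (/ s * (2 * INR n)).
        { apply Rmult_le_compat_l; [left; apply Rinv_0_lt_compat; lra| exact A1]. }
        unfold C, s. right. field. lra.
    - exists hzero. rewrite hsub_0, <- Hu, (lin_zero T L), hnorm_zero. split; [exact He | lra]. }
  exists (2 * C). intro z.
  assert (Heta : forall eta, 0 < eta -> hnorm (app T z) <= 2 * C * (hnorm z + eta)).
  { intros eta Heta. set (d := hnorm z + eta).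
    assert (Hd : 0 < d) by (unfold d; pose proof (hnorm_ge0 z); lra).
    assert (Hex : forall (u : H) (e : R), exists w, 0 < e ->
               hnorm (hsub u w) < e /\ hnorm (app T w) <= C * hnorm u).
    { intros u e. destruct (Rlt_dec 0 e) as [he|he].
      - destruct (S3 u e he) as [w Hw]. exists w; auto.
      - exists u; intro; contradiction. }
    pose (W := fun u e => proj1_sig (constructive_indefinite_description _ (Hex u e))).
    assert (HW : forall u e, 0 < e -> hnorm (hsub u (W u e)) < e /\
                  hnorm (app T (W u e)) <= C * hnorm u).
    { intros u e. unfold W. destruct (constructive_indefinite_description _ (Hex u e)); auto. }
    pose (v := fix f m := match m with O => @hzero H
               | S m => hadd (f m) (W (hsub z (f m)) (d * (/2) ^ (S m))) end).
    assert (P1 : forall m, hnorm (hsub z (v m)) <= d * (/2) ^ m).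
    { induction m as [|m IH]; simpl.
      - rewrite hsub_0. unfold d. lra.
      - rewrite hsub_add_r. left. apply HW.
        apply Rmult_lt_0_compat; [lra|]. assert (0 < (/2)^m) by (apply pow_lt; lra); nra. }
    assert (P2 : forall m, hnorm (hsub (app T (v (S m))) (app T (v m))) <= C * d * (/2) ^ m).
    { intro m. simpl. rewrite Aadd by auto. rewrite hsub_addK.
      destruct (HW (hsub z (v m)) (d * (/2) ^ (S m))) as [_ B].
      { apply Rmult_lt_0_compat; [lra|]. apply pow_lt; lra. }
      specialize (P1 m). apply Rle_trans with (1 := B).
      rewrite Rmult_assoc. apply Rmult_le_compat_l; auto. }
    assert (P3 : forall a b, (a <= b)%nat ->
       hnorm (hsub (app T (v b)) (app T (v a))) <= 2 * C * d * ((/2) ^ a - (/2) ^ b)).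
    { intros a b Hab. induction Hab.
      - rewrite hsub_diag, hnorm_zero. lra.
      - pose proof (hnorm_sub_tri (app T (v (S m))) (app T (v m)) (app T (v a))).
        specialize (P2 m). simpl ((/2) ^ S m).
        assert (0 <= C * d * (/ 2) ^ m).
        { apply Rmult_le_pos; [apply Rmult_le_pos; lra|]. apply pow_le; lra. }
        lra. }
    destruct (limit_of_cauchy (fun m => app T (v m))) as [y Hy].
    { intros eps He. destruct (small_mul (2 * C * d) eps) as [N HN]; auto.
      { apply Rmult_le_pos; lra. }
      exists N. intros a b Ha Hb.
      destruct (Nat.le_ge_cases a b) as [h|h].
      - specialize (P3 a b h). rewrite hnorm_sub_sym in P3. specialize (HN a Ha).
        assert (0 <= (/2) ^ b) by (apply pow_le; lra).
        assert (0 <= 2 * C * d * (/ 2) ^ b) by (apply Rmult_le_pos; [apply Rmult_le_pos|]; lra).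
        lra.
      - specialize (P3 b a h). specialize (HN b Hb).
        assert (0 <= 2 * C * d * (/ 2) ^ a) by (apply Rmult_le_pos; [apply Rmult_le_pos|]; try lra; apply pow_le; lra).
        lra. }
    assert (Hv : hconv v z).
    { intros eps He. destruct (small_mul d eps) as [N HN]; [lra|auto|].
      exists N. intros m Hm. rewrite hnorm_sub_sym. specialize (P1 m). specialize (HN m Hm). lra. }
    destruct (Cl v z y (fun _ => Dall _) Hv Hy) as [_ Ez]. rewrite Ez.
    rewrite <- (hsub_0 y).
    apply (bound_of_limit (fun m => app T (v m)) y hzero _ O Hy).
    intros m _. specialize (P3 O m (Nat.le_0_l m)).
    simpl v in P3 at 2. rewrite (lin_zero T L), hsub_0 in P3. simpl in P3.
    assert (0 <= (/2) ^ m) by (apply pow_le; lra).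
    assert (0 <= 2 * C * d * (/ 2) ^ m) by (apply Rmult_le_pos; [apply Rmult_le_pos|]; lra).
    rewrite hsub_0. lra. }
  apply Rnot_lt_le. intro Hlt.
  destruct (Req_dec C 0) as [C0|C0].
  - specialize (Heta 1 Rlt_0_1). rewrite C0 in *. lra.
  - assert (Cp : 0 < C) by lra.
    set (eta := (hnorm (app T z) - 2 * C * hnorm z) / (4 * C)).
    assert (0 < eta) by (unfold eta; apply Rdiv_lt_0_compat; lra).
    specialize (Heta eta H0). unfold eta in Heta.
    replace (2 * C * (hnorm z + (hnorm (app T z) - 2 * C * hnorm z) / (4 * C)))
      with (2 * C * hnorm z + (hnorm (app T z) - 2 * C * hnorm z) / 2) in Heta by (field; lra).
    lra.
Qed.

Theorem mainTheorem1 (H K : HilbertSpace) (A : Op H H) (B : Op K K) (T : Op H K) :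
  linear_op A -> densely_defined A ->
  linear_op B -> densely_defined B ->
  quasi_similar_via A B T ->
  (exists lam : Cplx, in_resolvent A lam) ->
  everywhere_defined_bounded T.
Proof.
  intros _ _ _ _ [(Cl & _ & L & Io0 & _ & _) _] [lam (Rl & HR & _ & _)].
  assert (Dall : forall x, dom T x).
  { intro y. destruct (HR y) as [DA E]. rewrite <- E.
    destruct (Io0 _ DA) as [D1 D2].
    assert (D3 : dom T (hscal lam (Rl y))) by (destruct L as (_ & _ & Dsc & _); auto).
    exact (proj1 (lin_sub T _ _ L D2 D3)). }
  split; [exact Dall|]. exact (closed_graph T L Cl Dall).
Qed.
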